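(* Let $p$ be an $m$-dimensional subspace of the real projective space $P^n$ and $p^*$ an $(n-m-1)$-dimensional subspace with $p\cap p^*=\emptyset$, belonging to a normalized domain of the Grassmannian $G(m,n)$ (notation in the context). Let $(p',p^{*\prime})$ be the infinitesimally close $m$-pair, $p'=(A_0+dA_0)\wedge\dots\wedge(A_m+dA_m)$, $p^{*\prime}=(A_{m+1}+dA_{m+1})\wedge\dots\wedge(A_n+dA_n)$, and let $W$ be the cross-ratio of the $m$-pairs $(p,p^* )$ and $(p',p^{*\prime})$. Then the quadratic form $g=\omega_i^\alpha\omega_\alpha^i$ satisfies $$ g=\omega_i^\alpha\omega_\alpha^i=(m+1)\,\mathrm{pr.p.}\Bigl[\log\Bigl(\tfrac{1}{m+1}\,\mathrm{tr}\,W\Bigr)\Bigr]. $$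
   Context: Index ranges: $0\le\xi,\eta,\zeta\le n$; $0\le\alpha,\beta,\gamma\le m$; $m+1\le i,j,k\le n$; summation over repeated indices. A normalized domain: an open domain $U$ of the Grassmannian $G(m,n)$ of $m$-planes of $P^n$, together with a differentiable map $\nu$ assigning to each $p\in U$ an $(n-m-1)$-plane $p^*$ with $p\cap p^*=\emptyset$; the pair $(p,p^* )$ is called an $m$-pair. To each $m$-pair one associates moving point frames $\{A_\xi\}$ with $A_\alpha\in p$, $A_i\in p^*$, $p=A_0\wedge\dots\wedge A_m$, $p^*=A_{m+1}\wedge\dots\wedge A_n$, and $dA_\xi=\omega_\xi^\eta A_\eta$, where the 1-forms satisfy $d\omega_\xi^\eta=\omega_\xi^\zeta\wedge\omega_\zeta^\eta$. The forms $\omega_\alpha^i$ are the basis forms on $U$, and the normalization gives $\omega_i^\alpha=\lambda_{ij}^{\alpha\beta}\omega_\beta^j$. Matrix coordinates of an $m$-plane: the $(n+1)\times(m+1)$ matrix whose columns are coordinates (w.r.t. the frame $\{A_\xi\}$) of $m+1$ points spanning it; tangential matrix coordinates of an $(n-m-1)$-plane: the $(m+1)\times(n+1)$ matrix whose rows are coefficients of $m+1$ independent linear equations defining it. If $X,Y$ are matrix coordinates of $p,p'$ and $U,V$ tangential matrix coordinates of $p^*,p^{*\prime}$, the cross-ratio of the $m$-pairs $(p,p^* )$, $(p',p^{*\prime})$ is $W=X(UX)^{-1}(UY)(VY)^{-1}V$. Here $\mathrm{pr.p.}$ denotes the principal part, i.e. the lowest-order nonvanishing term of the expansion of the expression in the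 entries of the matrix $(\omega_\xi^\eta)$ (second order terms here, higher-order terms discarded). *)

(* Defs.v *)
From HB Require Import structures.
From mathcomp Require Import all_boot all_order all_algebra.
From mathcomp Require Import all_classical all_reals all_analysis.
Set Implicit Arguments. Unset Strict Implicit. Unset Printing Implicit Defensive.
Import Order.TTheory GRing.Theory Num.Theory.
Local Open Scope ring_scope.

(* Projective space P^n with n = m + k + 1, homogeneous coordinates indexed by
   'I_(m.+1 + k.+1).  Indices alpha : 'I_m.+1 are embedded by lshift,
   indices i (= m+1 .. n) : 'I_k.+1 by rshift.
   Om : the matrix (omega_xi^eta) evaluated on a tangent vector,
   Om xi eta = omega_xi^eta, so that dA_xi = sum_eta Om xi eta A_eta. *)

Section Defs.
Variables (R : realType) (m k : nat).
Local Notation N := (m.+1 + k.+1)%N.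

Definition idx_a (a : 'I_m.+1) : 'I_N := lshift k.+1 a.
Definition idx_i (i : 'I_k.+1) : 'I_N := rshift m.+1 i.

(* matrix coordinates (w.r.t. the frame {A_xi}) of the points A_alpha + t dA_alpha
   spanning p' (t = 0 gives A_alpha, spanning p) *)
Definition pt_alpha (Om : 'M[R]_N) (t : R) : 'M[R]_(N, m.+1) :=
  \matrix_(r, a) ((idx_a a == r)%:R + t * Om (idx_a a) r).

(* coordinates of the points A_i + t dA_i spanning p-star' (t = 0: A_i, spanning p-star) *)
Definition pt_i (Om : 'M[R]_N) (t : R) : 'M[R]_(N, k.+1) :=
  \matrix_(r, i) ((idx_i i == r)%:R + t * Om (idx_i i) r).

(* tangential matrix coordinates of the (n-m-1)-plane spanned by the columns of Z:
   m+1 independent linear equations (rows) vanishing on it *)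
Definition tangential_coords (V : 'M[R]_(m.+1, N)) (Z : 'M[R]_(N, k.+1)) : Prop :=
  V *m Z = 0 /\ \rank V = m.+1.

Definition cross_ratio (X Y : 'M[R]_(N, m.+1)) (U V : 'M[R]_(m.+1, N)) : 'M[R]_N :=
  X *m invmx (U *m X) *m (U *m Y) *m invmx (V *m Y) *m V.

Definition gform (Om : 'M[R]_N) : R :=
  \sum_(a < m.+1) \sum_(i < k.+1) Om (idx_i i) (idx_a a) * Om (idx_a a) (idx_i i).

Definition normalized (lam : 'I_k.+1 -> 'I_k.+1 -> 'I_m.+1 -> 'I_m.+1 -> R)
  (Om : 'M[R]_N) : Prop :=
  forall (i : 'I_k.+1) (a : 'I_m.+1),
    Om (idx_i i) (idx_a a) =
    \sum_(j < k.+1) \sum_(b < m.+1) lam i j a b * Om (idx_a b) (idx_i j).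

End Defs.

(* Main.v *)
Require Import Defs.
From HB Require Import structures.
From mathcomp Require Import all_boot all_order all_algebra.
From mathcomp Require Import all_classical all_reals all_analysis.
From mathcomp Require Import ring lra.
Set Implicit Arguments. Unset Strict Implicit. Unset Printing Implicit Defensive.
Import Order.TTheory GRing.Theory Num.Theory.
Import numFieldNormedType.Exports.
Local Open Scope classical_set_scope.
Local Open Scope ring_scope.

Section Helpers.
Variable R : realType.
Context {T : Type} (F : set_system T) {FF : Filter F}.

Lemma cvg_bigsum (I : Type) (r : seq I) (P : pred I) (f : I -> T -> R) (a : I -> R) :
  (forall i, f i x @[x --> F] --> a i) ->
  (\sum_(i <- r | P i) f i x) @[x --> F] --> \sum_(i <- r | P i) a i.
Proof.
move=> H; elim: r => [|i r IH].
  rewrite big_nil; under eq_cvg do rewrite big_nil; exact: cvg_cst.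
rewrite big_cons; under eq_cvg do rewrite big_cons.
case: (P i) => //; exact: cvgD.
Qed.

Lemma cvg_bigprod (I : Type) (r : seq I) (P : pred I) (f : I -> T -> R) (a : I -> R) :
  (forall i, f i x @[x --> F] --> a i) ->
  (\prod_(i <- r | P i) f i x) @[x --> F] --> \prod_(i <- r | P i) a i.
Proof.
move=> H; elim: r => [|i r IH].
  rewrite big_nil; under eq_cvg do rewrite big_nil; exact: cvg_cst.
rewrite big_cons; under eq_cvg do rewrite big_cons.
case: (P i) => //; exact: cvgM.
Qed.

Definition mcvg {p q : nat} (f : T -> 'M[R]_(p, q)) (M : 'M[R]_(p, q)) :=
  forall i j, (f x i j) @[x --> F] --> M i j.

Lemma mcvg_cst p q (M : 'M[R]_(p, q)) : mcvg (fun _ => M) M.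
Proof. move=> i j; exact: cvg_cst. Qed.

Lemma mcvgD p q (f g : T -> 'M[R]_(p, q)) M N :
  mcvg f M -> mcvg g N -> mcvg (fun x => f x + g x) (M + N).
Proof.
move=> Hf Hg i j; rewrite mxE; under eq_cvg do rewrite mxE; exact: cvgD.
Qed.

Lemma mcvgN p q (f : T -> 'M[R]_(p, q)) M :
  mcvg f M -> mcvg (fun x => - f x) (- M).
Proof.
move=> Hf i j; rewrite mxE; under eq_cvg do rewrite mxE; exact: cvgN.
Qed.

Lemma mcvgZ p q (s : T -> R) (a : R) (f : T -> 'M[R]_(p, q)) M :
  s x @[x --> F] --> a -> mcvg f M -> mcvg (fun x => s x *: f x) (a *: M).
Proof.
move=> Hs Hf i j; rewrite mxE; under eq_cvg do rewrite mxE; exact: cvgM.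
Qed.

Lemma mcvgM p q r (f : T -> 'M[R]_(p, q)) (g : T -> 'M[R]_(q, r)) M N :
  mcvg f M -> mcvg g N -> mcvg (fun x => f x *m g x) (M *m N).
Proof.
move=> Hf Hg i j; rewrite mxE; under eq_cvg do rewrite mxE.
apply: cvg_bigsum => l; exact: cvgM.
Qed.

Lemma mcvgT p q (f : T -> 'M[R]_(p, q)) M :
  mcvg f M -> mcvg (fun x => (f x)^T) M^T.
Proof. move=> Hf i j; rewrite mxE; under eq_cvg do rewrite mxE; exact: Hf. Qed.

Lemma mcvg_det p (f : T -> 'M[R]_p) M :
  mcvg f M -> (\det (f x)) @[x --> F] --> \det M.
Proof.
move=> Hf; rewrite /determinant; apply: cvg_bigsum => s.
apply: cvgM; first exact: cvg_cst.
apply: cvg_bigprod => i; exact: Hf.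
Qed.

Lemma mcvg_adj p (f : T -> 'M[R]_p) M :
  mcvg f M -> mcvg (fun x => \adj (f x)) (\adj M).
Proof.
move=> Hf i j; rewrite mxE; under eq_cvg do rewrite mxE.
rewrite /cofactor; apply: cvgM; first exact: cvg_cst.
apply: mcvg_det => a b; rewrite !mxE; under eq_cvg do rewrite !mxE; exact: Hf.
Qed.

Lemma mcvg_unit p (f : T -> 'M[R]_p) M :
  M \in unitmx -> mcvg f M -> \forall x \near F, f x \in unitmx.
Proof.
move=> HM Hf.
have Hd := mcvg_det Hf.
have dM : \det M != 0 by rewrite -unitfE -unitmxE.
have := @cvgr_dist_lt _ _ _ F FF _ _ Hd `|\det M|; rewrite normr_gt0 => /(_ dM).
apply: filterS => x Hx; rewrite unitmxE unitfE; apply/eqP => H0.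
by move: Hx; rewrite H0 subr0 ltxx.
Qed.

Lemma mcvg_inv p (f : T -> 'M[R]_p) M :
  M \in unitmx -> mcvg f M -> mcvg (fun x => invmx (f x)) (invmx M).
Proof.
move=> HM Hf.
have Hd := mcvg_det Hf.
have dM : \det M != 0 by rewrite -unitfE -unitmxE.
have Hu : \forall x \near F, f x \in unitmx.
  have := @cvgr_dist_lt _ _ _ F FF _ _ Hd `|\det M|; rewrite normr_gt0 => /(_ dM).
  apply: filterS => x Hx; rewrite unitmxE unitfE; apply/eqP => H0.
  by move: Hx; rewrite H0 subr0 ltxx.
move=> i j.
apply: (cvg_trans (near_eq_cvg _)).
  near=> x; rewrite /invmx ifT //; near: x; exact: Hu.
rewrite /invmx HM.
have H := mcvgZ (cvgV dM Hd) (mcvg_adj Hf).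
move: (H FF i j).
exact.
Unshelve. all: by end_near.
Qed.

End Helpers.

Section LnLower.
Variable R : realType.
Lemma ln_lower (x : R) : -1 < x -> x / (1 + x) <= ln (1 + x).
Proof.
move=> Hx.
have H1 : 0 < 1 + x by rewrite -ltrBlDl sub0r.
have Hy : -1 < - (x / (1 + x)).
  rewrite ltrNl opprK ltr_pdivrMr // mul1r ltrDr //.
have := le_ln1Dx Hy.
have -> : 1 - x / (1 + x) = (1 + x)^-1.
  by field; rewrite gt_eqF.
rewrite lnV ?posrE // lerN2 //.
Qed.
End LnLower.

Section Alg.
Variables (R : realType) (m k : nat) (Om : 'M[R]_(m.+1 + k.+1)).

Definition Am : 'M[R]_m.+1 := \matrix_(a, b) Om (lshift k.+1 a) (lshift k.+1 b).
Definition Bm : 'M[R]_(m.+1, k.+1) := \matrix_(a, i) Om (lshift k.+1 a) (rshift m.+1 i).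
Definition Cm : 'M[R]_(k.+1, m.+1) := \matrix_(i, a) Om (rshift m.+1 i) (lshift k.+1 a).
Definition Dm : 'M[R]_k.+1 := \matrix_(i, j) Om (rshift m.+1 i) (rshift m.+1 j).

Definition Pt (t : R) : 'M[R]_m.+1 := 1%:M + t *: Am^T.
Definition Qt (t : R) : 'M[R]_k.+1 := 1%:M + t *: Dm^T.
Definition Kt (t : R) : 'M[R]_m.+1 := Cm^T *m invmx (Qt t) *m Bm^T.
Definition Nt (t : R) : 'M[R]_m.+1 := Pt t - (t ^+ 2) *: Kt t.

Lemma usub_alpha t : usubmx (pt_alpha Om t) = Pt t.
Proof.
apply/matrixP => a b; rewrite !mxE /idx_a eq_lshift (eq_sym b).
by [].
Qed.

Lemma dsub_alpha t : dsubmx (pt_alpha Om t) = t *: Bm^T.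
Proof.
apply/matrixP => a b; rewrite !mxE /idx_a eq_lrshift add0r.
by [].
Qed.

Lemma usub_i t : usubmx (pt_i Om t) = t *: Cm^T.
Proof.
apply/matrixP => a b; rewrite !mxE /idx_i eq_rlshift add0r.
by [].
Qed.

Lemma dsub_i t : dsubmx (pt_i Om t) = Qt t.
Proof.
apply/matrixP => a b; rewrite !mxE /idx_i eq_rshift (eq_sym b).
by [].
Qed.


Lemma key (U V : 'M[R]_(m.+1, m.+1 + k.+1)) t :
  tangential_coords U (pt_i Om 0) -> tangential_coords V (pt_i Om t) ->
  Qt t \in unitmx -> Nt t \in unitmx ->
  \tr (cross_ratio (pt_alpha Om 0) (pt_alpha Om t) U V) =
  (m.+1)%:R + t ^+ 2 * \tr (Kt t *m invmx (Nt t)).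
Proof.
have [U1 [U2 ->]] : exists U1 U2, U = row_mx U1 U2.
  by exists (lsubmx U), (rsubmx U); rewrite hsubmxK.
have [V1 [V2 ->]] : exists V1 V2, V = row_mx V1 V2.
  by exists (lsubmx V), (rsubmx V); rewrite hsubmxK.
move=> [HU rU] [HV rV] Qu Nu.
have U20 : U2 = 0.
  move: HU; rewrite -[pt_i Om 0]vsubmxK mul_row_col usub_i dsub_i scale0r mulmx0 add0r.
  by rewrite /Qt scale0r addr0 mulmx1.
rewrite U20 in rU *.
rewrite rank_row_mx0 in rU.
have U1u : U1 \in unitmx by rewrite -row_free_unit /row_free rU.
have HV' : V1 *m (t *: Cm^T) + V2 *m Qt t = 0.
  by move: HV; rewrite -[pt_i Om t]vsubmxK mul_row_col usub_i dsub_i.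
have V2eq : V2 = - (V1 *m (t *: Cm^T)) *m invmx (Qt t).
  rewrite -(mulmxK Qu V2); congr (_ *m _); apply/eqP.
  by rewrite -addr_eq0 addrC HV'.
have Veq : row_mx V1 V2 = V1 *m row_mx 1%:M (- (t *: Cm^T) *m invmx (Qt t)).
  by rewrite mul_mx_row mulmx1 mulmxA mulmxN -V2eq.
have V1u : V1 \in unitmx.
  have := mxrankM_maxl V1 (row_mx 1%:M (- (t *: Cm^T) *m invmx (Qt t))).
  rewrite -Veq rV => H.
  by rewrite -row_free_unit /row_free eqn_leq rank_leq_row H.
have X0 : pt_alpha Om 0 = col_mx 1%:M (0 : 'M[R]_(k.+1, m.+1)).
  by rewrite -[pt_alpha Om 0]vsubmxK usub_alpha dsub_alpha scale0r /Pt scale0r addr0.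
have Y : pt_alpha Om t = col_mx (Pt t) (t *: Bm^T).
  by rewrite -[LHS]vsubmxK usub_alpha dsub_alpha.
have UX : row_mx U1 (0 : 'M[R]_(m.+1, k.+1)) *m col_mx 1%:M (0 : 'M[R]_(k.+1, m.+1)) = U1.
  by rewrite mul_row_col mulmx1 mulmx0 addr0.
have UY : row_mx U1 (0 : 'M[R]_(m.+1, k.+1)) *m col_mx (Pt t) (t *: Bm^T) = U1 *m Pt t.
  by rewrite mul_row_col mul0mx addr0.
have VX : row_mx V1 V2 *m col_mx 1%:M (0 : 'M[R]_(k.+1, m.+1)) = V1.
  by rewrite mul_row_col mulmx1 mulmx0 addr0.
have VY : row_mx V1 V2 *m col_mx (Pt t) (t *: Bm^T) = V1 *m Nt t.
  rewrite mul_row_col V2eq /Nt /Kt mulmxBr; congr (_ + _).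
  rewrite !mulNmx; congr (- _).
  by rewrite -!scalemxAr -!scalemxAl scalerA expr2 !mulmxA.
have VNu : V1 *m Nt t \in unitmx by rewrite unitmx_mul V1u Nu.
have iVN : invmx (V1 *m Nt t) *m V1 = invmx (Nt t).
  have -> : invmx (V1 *m Nt t) *m V1 = invmx (V1 *m Nt t) *m V1 *m (Nt t *m invmx (Nt t)).
    by rewrite mulmxV // mulmx1.
  by rewrite mulmxA -(mulmxA _ V1 (Nt t)) mulVmx // mul1mx.
rewrite /cross_ratio X0 Y UX UY VY.
rewrite -(mulmxA (col_mx 1%:M (0 : 'M[R]_(k.+1, m.+1))) (invmx U1)) mulKmx //.
rewrite mxtrace_mulC !mulmxA VX -mulmxA mxtrace_mulC -mulmxA iVN.
have -> : Pt t = Nt t + t ^+ 2 *: Kt t by rewrite /Nt subrK.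
by rewrite mulmxDl mulmxV // mxtraceD mxtrace1 -scalemxAl mxtraceZ.
Qed.

End Alg.

Theorem theorem1 (R : realType) (m k : nat)
  (lam : 'I_k.+1 -> 'I_k.+1 -> 'I_m.+1 -> 'I_m.+1 -> R)
  (Om : 'M[R]_(m.+1 + k.+1)) (HOm : normalized lam Om)
  (U : 'M[R]_(m.+1, m.+1 + k.+1)) (V : R -> 'M[R]_(m.+1, m.+1 + k.+1))
  (HU : tangential_coords U (pt_i Om 0))
  (HV : \forall t \near dnbhs (0:R), tangential_coords (V t) (pt_i Om t)) :
  (fun t : R =>
     (m.+1)%:R *
       ln (\tr (cross_ratio (pt_alpha Om 0) (pt_alpha Om t) U (V t)) / (m.+1)%:R)
     / t ^+ 2)
    @ dnbhs (0:R) --> gform Om.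
Proof.
pose m1 : R := (m.+1)%:R.
have m1n0 : m1 != 0 by rewrite /m1 pnatr_eq0.
have m1p : 0 < m1 by rewrite /m1 ltr0n.

have FF0 : ProperFilter (dnbhs (0:R)) by exact: Proper_dnbhs_numFieldType.
have FF1 : Filter (dnbhs (0:R)) by exact: FF0.
have tc : (fun t : R => t) @ (dnbhs (0:R)) --> (0:R) by exact: cvg_within.
have t2c : (fun t : R => t ^+ 2) @ (dnbhs (0:R)) --> (0:R) ^+ 2 by apply: cvgM; exact: tc.
rewrite expr2 mul0r in t2c.
have Qc : mcvg (dnbhs (0:R)) (Qt Om) (1%:M + 0 *: (Dm Om)^T).
  apply: mcvgD; first exact: mcvg_cst.
  apply: mcvgZ; [exact: tc | exact: mcvg_cst].
rewrite scale0r addr0 in Qc.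
have iQc : mcvg (dnbhs (0:R)) (fun t => invmx (Qt Om t)) (invmx 1%:M).
  by apply: mcvg_inv => //; exact: unitmx1.
rewrite invmx1 in iQc.
have Kc : mcvg (dnbhs (0:R)) (Kt Om) ((Cm Om)^T *m 1%:M *m (Bm Om)^T).
  apply: mcvgM; last exact: mcvg_cst.
  apply: mcvgM; [exact: mcvg_cst | exact: iQc].
have Nc : mcvg (dnbhs (0:R)) (Nt Om) (1%:M + 0 *: (Am Om)^T - 0 *: ((Cm Om)^T *m 1%:M *m (Bm Om)^T)).
  apply: mcvgD.
    apply: mcvgD; first exact: mcvg_cst.
    apply: mcvgZ; [exact: tc | exact: mcvg_cst].
  apply: mcvgN; apply: mcvgZ; [exact: t2c | exact: Kc].
rewrite !scale0r addr0 subr0 in Nc.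
have iNc : mcvg (dnbhs (0:R)) (fun t => invmx (Nt Om t)) (invmx 1%:M).
  by apply: mcvg_inv => //; exact: unitmx1.
rewrite invmx1 in iNc.
pose h t := \tr (Kt Om t *m invmx (Nt Om t)).
have gE : gform Om = \tr ((Cm Om)^T *m 1%:M *m (Bm Om)^T *m 1%:M).
  rewrite /gform /mxtrace; apply: eq_bigr => a _; rewrite !mulmx1 mxE.
  by apply: eq_bigr => i _; rewrite !mxE.
have hc : h t @[t --> (dnbhs (0:R))] --> gform Om.
  rewrite gE /h /mxtrace; apply: cvg_bigsum => i.
  have KN : mcvg (dnbhs (0:R)) (fun t => Kt Om t *m invmx (Nt Om t))
    ((Cm Om)^T *m 1%:M *m (Bm Om)^T *m 1%:M) by apply: mcvgM.
  exact: (KN i i).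
pose x t := t ^+ 2 * h t / m1.
have xc : x t @[t --> (dnbhs (0:R))] --> 0 * gform Om * m1^-1.
  apply: cvgM; last exact: cvg_cst.
  by apply: cvgM.
rewrite !mul0r in xc.
have Qu : \forall t \near (dnbhs (0:R)), Qt Om t \in unitmx.
  by apply: mcvg_unit Qc; exact: unitmx1.
have Nu : \forall t \near (dnbhs (0:R)), Nt Om t \in unitmx.
  by apply: mcvg_unit Nc; exact: unitmx1.
have xb : \forall t \near (dnbhs (0:R)), -1 < x t.
  have := @cvgr_dist_lt _ _ _ _ FF1 _ _ xc 1 ltr01.
  apply: filterS => t; rewrite sub0r normrN => Ht.
  have := ler_norm (- x t); rewrite normrN => H2.
  rewrite ltrNl; exact: (le_lt_trans H2 Ht).
have tn0 : \forall t \near (dnbhs (0:R)), t != 0 by exact: nbhs_dnbhs_neq.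
have E : \forall t \near (dnbhs (0:R)),
  (m.+1)%:R * ln (\tr (cross_ratio (pt_alpha Om 0) (pt_alpha Om t) U (V t)) / (m.+1)%:R)
     / t ^+ 2 = m1 * ln (1 + x t) / t ^+ 2.
  near=> t.
  rewrite (key HU); first last.
  - by near: t.
  - by near: t.
  - by near: t.
  congr (_ * ln _ / _); rewrite /x /h -/m1.
  by field.
have E' : \forall t \near (dnbhs (0:R)), m1 * ln (1 + x t) / t ^+ 2 =
  (m.+1)%:R * ln (\tr (cross_ratio (pt_alpha Om 0) (pt_alpha Om t) U (V t)) / (m.+1)%:R)
     / t ^+ 2 by apply: filterS E => t ->.
have NE := near_eq_cvg E'.
apply: (cvg_trans (NE FF1)).
have L : (fun t => h t / (1 + x t)) @ (dnbhs (0:R)) --> gform Om / (1 + 0).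
  apply: cvgM => //; apply: cvgV; first by rewrite addr0 oner_neq0.
  by apply: cvgD => //; exact: cvg_cst.
rewrite addr0 invr1 mulr1 in L.
apply: (squeeze_cvgr _ L hc).
near=> t.
have t0 : t != 0 by near: t.
have xg : -1 < x t by near: t.
have c0 : 0 < m1 / t ^+ 2 by rewrite divr_gt0 // lt_def sqrf_eq0 t0 sqr_ge0.
have x1 : 0 < 1 + x t by rewrite -ltrBlDl sub0r.
have -> : m1 * ln (1 + x t) / t ^+ 2 = m1 / t ^+ 2 * ln (1 + x t) by rewrite mulrAC.
apply/andP; split.
  have -> : h t / (1 + x t) = m1 / t ^+ 2 * (x t / (1 + x t)).
    rewrite /x; field.
    rewrite nat1r -/m1 m1n0 t0 andbT /=.
    have -> : m1 + t ^+ 2 * h t = m1 * (1 + x t) by rewrite /x; field.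
    by rewrite mulf_neq0 // gt_eqF.
  by rewrite ler_pM2l // ln_lower.
have -> : h t = m1 / t ^+ 2 * x t.
  rewrite /x; field.
  by rewrite nat1r -/m1 m1n0 t0.
by rewrite ler_pM2l // le_ln1Dx.
Unshelve. all: by end_near.
Qed.
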